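(* Let $k,c\geq 0$ be integers. If $G$ is a $k$-gap-planar graph and a subgraph $G'$ of $G$ is a $(\leq c)$-subdivision of some graph $H$, then $H$ is $(c+1)k$-gap-planar.
   Context: All graphs are simple, finite and undirected. A drawing of a graph $G$ in the plane represents each vertex by a distinct point and each edge $vw$ by a non-self-intersecting curve between the points of $v$ and $w$, such that no three edges cross at a single point. A drawing is $k$-gap-planar if every crossing can be charged to one of the two edges involved so that at most $k$ crossings are charged to each edge; a graph is $k$-gap-planar if it has a $k$-gap-planar drawing in the plane. A $(\leq c)$-subdivision of a graph $H$ is obtained by replacing each edge of $H$ by a path with at most $c$ new internal vertices, the paths being internally disjoint. *)

(* Defs.v *)
From mathcomp Require Import all_boot.
From Stdlib Require Import Reals List.

Set Implicit Arguments.
Unset Strict Implicit.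
Unset Printing Implicit Defensive.

Record sgraph := SGraph {
  svert : finType;
  sadj : rel svert;
  sadj_sym : symmetric sadj;
  sadj_irr : irreflexive sadj }.

Definition is_edge (G : sgraph) (e : {set svert G}) : Prop :=
  exists u v : svert G, @sadj G u v /\ e = [set u; v].

Definition point := (R * R)%type.

Definition dist (p q : point) : R :=
  sqrt ((fst p - fst q) ^ 2 + (snd p - snd q) ^ 2)%R.

Definition in01 (t : R) : Prop := (0 <= t <= 1)%R.

Definition curve_continuous (g : R -> point) : Prop :=
  forall t, in01 t -> forall eps, (eps > 0)%R ->
    exists delta, (delta > 0)%R /\
      forall s, in01 s -> (Rabs (s - t) < delta)%R -> (dist (g s) (g t) < eps)%R.

Definition curve_simple (g : R -> point) : Prop :=
  forall s t, in01 s -> in01 t -> g s = g t -> s = t.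

Definition on_interior (g : R -> point) (p : point) : Prop :=
  exists t, (0 < t < 1)%R /\ g t = p.

Definition is_drawing (G : sgraph) (pos : svert G -> point)
    (curve : {set svert G} -> R -> point) : Prop :=
  injective pos /\
  (forall e, is_edge e ->
     curve_continuous (curve e) /\ curve_simple (curve e) /\
     exists u v, e = [set u; v] /\ curve e 0%R = pos u /\ curve e 1%R = pos v) /\
  (forall e w p, is_edge e -> on_interior (curve e) p -> p <> pos w) /\
  (forall e1 e2 e3 p, is_edge e1 -> is_edge e2 -> is_edge e3 ->
     e1 <> e2 -> e1 <> e3 -> e2 <> e3 ->
     on_interior (curve e1) p -> on_interior (curve e2) p ->
     on_interior (curve e3) p -> False).

Definition crossing (G : sgraph) (curve : {set svert G} -> R -> point)
    (e1 e2 : {set svert G}) (p : point) : Prop :=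
  is_edge e1 /\ is_edge e2 /\ e1 <> e2 /\
  on_interior (curve e1) p /\ on_interior (curve e2) p.

(* k-gap-planar drawing: every crossing {e1,e2} at p is charged (chi) to one of
   e1, e2, and every edge is charged with at most k crossings. *)
Definition gap_planar_drawing (G : sgraph) (curve : {set svert G} -> R -> point)
    (k : nat) : Prop :=
  exists chi : {set svert G} -> {set svert G} -> point -> {set svert G},
    (forall e1 e2 p, crossing curve e1 e2 p ->
       chi e1 e2 p = chi e2 e1 p /\ (chi e1 e2 p = e1 \/ chi e1 e2 p = e2)) /\
    (forall e, is_edge e ->
       exists l : list ({set svert G} * point), (length l <= k)%coq_nat /\
         forall f p, crossing curve e f p -> chi e f p = e -> In (f, p) l).

Definition k_gap_planar (G : sgraph) (k : nat) : Prop :=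
  exists (pos : svert G -> point) (curve : {set svert G} -> R -> point), is_drawing pos curve /\ gap_planar_drawing curve k.

(* G contains a subgraph that is a (<= c)-subdivision of H: an injective map
   phi of the vertices of H into G, and for every edge uv of H a path
   phi u, P u v, phi v in G with at most c internal vertices, where internal
   vertices are not branch vertices and paths of distinct edges are
   internally disjoint. *)
Definition has_subdivision_subgraph (G H : sgraph) (c : nat) : Prop :=
  exists (phi : svert H -> svert G) (P : svert H -> svert H -> list (svert G)),
    injective phi /\
    (forall u v, @sadj H u v ->
       P v u = seq.rev (P u v) /\
       (size (P u v) <= c)%N /\
       path (@sadj G) (phi u) (rcons (P u v) (phi v)) /\
       uniq (phi u :: rcons (P u v) (phi v)) /\
       (forall x w, x \in P u v -> x != phi w)) /\
    (forall u v u' v', @sadj H u v -> @sadj H u' v' ->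
       [set u; v] <> [set u'; v'] ->
       forall x, x \in P u v -> x \notin P u' v').

(* Main.v *)
Require Import Defs.
From mathcomp Require Import all_boot.
From Stdlib Require Import Reals List Lra Lia ClassicalEpsilon Classical.
From mathcomp Require Import zify.

Module Geo.
Local Open Scope R_scope.

Definition cont_on (a b : R) (f : R -> point) : Prop :=
  forall t, a <= t <= b -> forall eps, eps > 0 ->
    exists delta, delta > 0 /\
      forall s, a <= s <= b -> Rabs (s - t) < delta -> Defs.dist (f s) (f t) < eps.

Lemma cont_restr a b a' b' f : cont_on a b f -> a <= a' -> b' <= b -> cont_on a' b' f.
Proof.
move=> H h1 h2 t Ht eps Heps.
have [d [Hd Hs]] := H t ltac:(lra) eps Heps.
exists d; split => // s Hs' Hst; apply: Hs => //; lra.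
Qed.

Lemma cont_shift a b c f : cont_on a b f ->
  cont_on (a - c) (b - c) (fun u => f (u + c)).
Proof.
move=> H t Ht eps Heps.
have [d [Hd Hs]] := H (t + c) ltac:(lra) eps Heps.
exists d; split => // s Hs' Hst; apply: Hs; first lra.
by replace (s + c - (t + c)) with (s - t) by ring.
Qed.

Lemma cont_eqb a b a' b' f : cont_on a b f -> a = a' -> b = b' -> cont_on a' b' f.
Proof. by move=> H <- <-. Qed.

Lemma cont_scale D f : D > 0 -> cont_on 0 D f -> cont_on 0 1 (fun t => f (t * D)).
Proof.
move=> HD H t Ht eps Heps.
have Ht' : 0 <= t * D <= D.
  split; first nra. nra.
have [d [Hd Hs]] := H (t * D) Ht' eps Heps.
exists (d / D); split; first by apply: Rdiv_lt_0_compat.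
move=> s Hs' Hst; apply: Hs.
  split; first nra. nra.
replace (s * D - t * D) with ((s - t) * D) by ring.
rewrite Rabs_mult (Rabs_right D); last lra.
have -> : d = (d / D) * D by field; lra.
apply: Rmult_lt_compat_r => //.
Qed.

Lemma cont_glue a m b f g : a <= m <= b -> cont_on a m f -> cont_on m b g -> f m = g m ->
  cont_on a b (fun t => if Rle_dec t m then f t else g t).
Proof.
move=> Hm Hf Hg Hfg t Ht eps Heps.
case: (Rle_dec t m) => Htm.
- have [d1 [Hd1 Hs1]] := Hf t ltac:(lra) eps Heps.
  case: (Req_dec t m) => Htm'.
  + subst t.
    have [d2 [Hd2 Hs2]] := Hg m ltac:(lra) eps Heps.
    exists (Rmin d1 d2); split; first by apply: Rmin_pos.
    move=> s Hs Hst; case: (Rle_dec s m) => Hsm.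
    * apply: Hs1 => //; first lra.
      apply: Rlt_le_trans Hst _; apply: Rmin_l.
    * rewrite Hfg; apply: Hs2; first lra.
      apply: Rlt_le_trans Hst _; apply: Rmin_r.
  + exists (Rmin d1 (m - t)); split; first by apply: Rmin_pos; lra.
    move=> s Hs Hst.
    have Hst1 : Rabs (s - t) < d1 by apply: Rlt_le_trans Hst _; apply: Rmin_l.
    have Hst2 : Rabs (s - t) < m - t by apply: Rlt_le_trans Hst _; apply: Rmin_r.
    have Hsm : s <= m.
      move: Hst2; rewrite /Rabs; case: Rcase_abs; lra.
    destruct (Rle_dec s m) as [Hy|Hn]; last lra.
    apply: Hs1 => //; lra.
- have [d2 [Hd2 Hs2]] := Hg t ltac:(lra) eps Heps.
  exists (Rmin d2 (t - m)); split; first by apply: Rmin_pos; lra.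
  move=> s Hs Hst.
  have Hst1 : Rabs (s - t) < d2 by apply: Rlt_le_trans Hst _; apply: Rmin_l.
  have Hst2 : Rabs (s - t) < t - m by apply: Rlt_le_trans Hst _; apply: Rmin_r.
  have Hsm : ~ s <= m.
    move: Hst2; rewrite /Rabs; case: Rcase_abs; lra.
  destruct (Rle_dec s m) as [Hn|Hy]; first lra.
  apply: Hs2 => //; lra.
Qed.

Lemma finite_min (L : list R) : forall (P : R -> Prop),
  (forall t, P t -> In t L) -> (exists t, P t) ->
  exists t, P t /\ forall t', P t' -> t <= t'.
Proof.
elim: L => [|a L IH] P HL [t0 Ht0]; first by case: (HL _ Ht0).
case: (classic (exists t, P t /\ t <> a)) => [Hex|Hnex].
- have [m [[Pm Hma] Hmin]] := IH (fun t => P t /\ t <> a)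
    ltac:(move=> t [Pt Hta]; case: (HL _ Pt) => // Heq; by case: Hta)
    ltac:(case: Hex => t Ht; by exists t).
  case: (classic (P a)) => Pa.
  + case: (Rle_dec a m) => Ham.
    * exists a; split => // t' Pt'.
      case: (Req_dec t' a) => [->|Hne]; first lra.
      have := Hmin t' (conj Pt' Hne); lra.
    * exists m; split => // t' Pt'.
      case: (Req_dec t' a) => [->|Hne]; first lra.
      exact: Hmin t' (conj Pt' Hne).
  + exists m; split => // t' Pt'.
    case: (Req_dec t' a) => [Heq|Hne]; first by subst; case: Pa.
    exact: Hmin t' (conj Pt' Hne).
- exists a; split.
  + case: (classic (P a)) => // Pa; case: Hnex; exists t0; split => // Heq; subst; by [].
  + move=> t' Pt'; case: (Req_dec t' a) => [->|Hne]; first lra.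
    case: Hnex; by exists t'.
Qed.

Definition img (g : R -> point) (p : point) := exists s, in01 s /\ g s = p.

Lemma pts_to_params (al : R -> point) (Q : list point) (P : R -> Prop) :
  curve_simple al -> (forall t, P t -> in01 t /\ In (al t) Q) ->
  exists L, forall t, P t -> In t L.
Proof.
move=> Hs HP.
exists (List.map (fun q => epsilon (inhabits 0) (fun t => in01 t /\ al t = q)) Q).
move=> t Pt; have [H01 HQ] := HP t Pt.
apply/in_map_iff; exists (al t); split => //.
have Hex : exists t', in01 t' /\ al t' = al t by exists t.
have [H1 H2] := epsilon_spec (inhabits 0) _ Hex.
by apply: Hs.
Qed.

Lemma combine (al ga : R -> point) :
  curve_continuous al -> curve_simple al ->
  curve_continuous ga -> curve_simple ga ->
  al 1 = ga 0 -> al 0 <> ga 1 ->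
  (exists Q, forall p, img al p -> img ga p -> In p Q) ->
  exists be, curve_continuous be /\ curve_simple be /\ be 0 = al 0 /\ be 1 = ga 1 /\
    forall t, in01 t -> img al (be t) \/ img ga (be t).
Proof.
move=> Hac Has Hgc Hgs H10 H01 [Q HQ].
pose P t := in01 t /\ img ga (al t).
have [L HL] : exists L, forall t, P t -> In t L.
  apply: (@pts_to_params al Q P Has) => t [Ht Hi]; split => //; apply: HQ => //; by exists t.
have [ts [[Hts [ss [Hss Hgs']]] Hmin]] := @finite_min L P HL
   (ex_intro _ 1 (conj (conj (Rle_0_1) (Rle_refl 1)) (ex_intro _ 0 (conj (conj (Rle_refl 0) Rle_0_1) (esym H10))))).
case: Hts => Hts0 Hts1; case: Hss => Hss0 Hss1.
pose D := ts + (1 - ss).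
have HDdef : D = ts + (1 - ss) by [].
clearbody D.
have HD : D > 0.
  case: (Req_dec ts 0) => Ht0; last lra.
  case: (Req_dec ss 1) => Hs1; last lra.
  subst; by case: H01.
pose be' u := if Rle_dec u ts then al u else ga (u + (ss - ts)).
exists (fun t => be' (t * D)).
split.
  apply: cont_scale => //; rewrite /be'; apply: cont_glue; first lra.
  - apply: cont_restr Hac _ _; lra.
  - apply: (@cont_eqb (ss - (ss - ts)) (1 - (ss - ts)) ts D); [|ring|rewrite HDdef; ring].
    apply: cont_shift; apply: cont_restr Hgc _ _; lra.
  - rewrite -Hgs'; congr ga; ring.
split.
  move=> s t Hs Ht; rewrite /be'.
  case: Hs => Hs0 Hs1; case: Ht => Ht0 Ht1.
  have HsD : 0 <= s * D <= D by split; nra.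
  have HtD : 0 <= t * D <= D by split; nra.
  case: (Rle_dec (s * D) ts) => Hs'; case: (Rle_dec (t * D) ts) => Ht'.
  - move=> /= /Has E; have := E ltac:(split; lra) ltac:(split; lra).
    move=> E'; apply: (Rmult_eq_reg_r D) => //; lra.
  - move=> /= E.
    have Pt : P (s * D).
      split; first (split; lra). exists (t * D + (ss - ts)); split; first (split; lra).
      by rewrite E.
    have := Hmin _ Pt => Hle.
    have Hst : s * D = ts by lra.
    rewrite Hst -Hgs' in E.
    have Hx : in01 ss by split; lra.
    have Hy : in01 (t * D + (ss - ts)) by split; lra.
    move: (Hgs _ _ Hx Hy E) => ?; lra.
  - move=> /= E.
    have Pt : P (t * D).
      split; first (split; lra). exists (s * D + (ss - ts)); split; first (split; lra).
      by rewrite E.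
    have := Hmin _ Pt => Hle.
    have Hst : t * D = ts by lra.
    rewrite Hst -Hgs' in E.
    have Hx : in01 ss by split; lra.
    have Hy : in01 (s * D + (ss - ts)) by split; lra.
    move: (Hgs _ _ Hy Hx E) => ?; lra.
  - move=> /= /Hgs E.
    have := E ltac:(split; lra) ltac:(split; lra).
    move=> E'; apply: (Rmult_eq_reg_r D) => //; lra.
split.
  rewrite /be' Rmult_0_l; case: Rle_dec => //; lra.
split.
  rewrite /be' Rmult_1_l; case: Rle_dec => Hd /=.
  - have Hs1 : ss = 1 by lra.
    have HDt : D = ts by lra.
    by rewrite HDt -Hgs' Hs1.
  - congr ga; rewrite HDdef; ring.
move=> t [Ht0 Ht1]; rewrite /be'.
have HtD : 0 <= t * D <= D by split; nra.
case: Rle_dec => Ht'.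
- left; exists (t * D); split => //; split; lra.
- right; exists (t * D + (ss - ts)); split => //; split; lra.
Qed.


Lemma chain (ga : nat -> R -> point) (N : nat) :
  (forall j : nat, (leq j N) -> curve_continuous (ga j) /\ curve_simple (ga j)) ->
  (forall j : nat, (leq j.+1 N) -> ga j 1 = ga j.+1 0) ->
  (forall i j : nat, (leq i.+1 j) -> (leq j N) ->
     exists Q, forall p, img (ga i) p -> img (ga j) p -> In p Q) ->
  (forall j : nat, (leq j N) -> ga O 0 <> ga j 1) ->
  forall n : nat, (leq n N) -> exists al, curve_continuous al /\ curve_simple al /\
    al 0 = ga O 0 /\ al 1 = ga n 1 /\
    forall t, in01 t -> exists j : nat, (leq j n) /\ img (ga j) (al t).
Proof.
move=> Hcs Hm Hf Hd; elim=> [|n IH] HnN.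
  have [Hc Hs] := Hcs O HnN.
  exists (ga O); do 4 (split => //).
  move=> t Ht; exists O; split => //; by exists t.
have [al [Hac [Has [Ha0 [Ha1 Him]]]]] := IH (ltnW HnN).
have [Hgc Hgs] := Hcs _ HnN.
have HQ : forall m, (leq m n) -> exists Q, forall j, (leq j m) ->
    forall p, img (ga j) p -> img (ga n.+1) p -> In p Q.
  elim=> [|m IHm] Hmn.
    have [Q HQ] := Hf O n.+1 isT HnN.
    exists Q => j; rewrite leqn0 => /eqP ->; exact: HQ.
  have [Q1 HQ1] := IHm (ltnW Hmn).
  have [Q2 HQ2] := Hf m.+1 n.+1 Hmn HnN.
  exists (Q1 ++ Q2) => j; rewrite leq_eqVlt ltnS => /orP [/eqP ->|Hj] p H1 H2;
    apply/in_or_app; [right; exact: HQ2 | left; exact: HQ1 Hj _ H1 H2].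
have [Q HQ'] := HQ n (leqnn n).
have HQQ : exists Q, forall p, img al p -> img (ga n.+1) p -> In p Q.
  exists Q => p [t [Ht <-]] Hg.
  have [j [Hj Hj']] := Him t Ht; exact: HQ' Hj _ Hj' Hg.
have E1 : al 1 = ga n.+1 0 by rewrite Ha1; exact: Hm n HnN.
have E2 : al 0 <> ga n.+1 1 by rewrite Ha0; exact: Hd _ HnN.
have [be [Hbc [Hbs [Hb0 [Hb1 Hbim]]]]] := @combine al (ga n.+1) Hac Has Hgc Hgs E1 E2 HQQ.
exists be; do 2 (split => //); split; first by rewrite Hb0.
split => // t Ht; case: (Hbim t Ht) => [[s [Hs Hse]]|Hg].
- have [j [Hj Hj']] := Him s Hs; exists j; split; first exact: leqW.
  by rewrite -Hse.
- by exists n.+1.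
Qed.

End Geo.

Import Geo.

Lemma set2_sub (T : finType) (a b x y : T) : a != b ->
  a \in [set x; y] -> b \in [set x; y] -> [set a; b] = [set x; y].
Proof.
move=> Hab Ha Hb; apply/eqP; rewrite eqEcard; apply/andP; split.
  apply/subsetP => z; rewrite !inE => /orP [/eqP ->|/eqP ->]; [move: Ha|move: Hb]; by rewrite !inE.
rewrite !cards2 Hab; by case: (x != y).
Qed.

Lemma gl_mem (T : finType) (e : rel T) x s g : path e x s ->
  In g (pairmap (fun a b => [set a; b]) x s) ->
  exists a b, e a b /\ g = [set a; b] /\ a \in x :: s /\ b \in x :: s.
Proof.
elim: s x => [|y s IH] x //= /andP [Hxy Hp] [<-|Hin].
  exists x, y; split => //; split => //; split; by rewrite !inE eqxx ?orbT.
have [a [b [Hab [-> [Ha Hb]]]]] := IH y Hp Hin.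
exists a, b; do 2 (split => //); split; rewrite inE; apply/orP; by right.
Qed.

Lemma length_flat_map (A B : Type) (f : A -> list B) (l : list A) k :
  (forall a, In a l -> (length (f a) <= k)%coq_nat) ->
  (length (flat_map f l) <= length l * k)%coq_nat.
Proof.
elim: l => [|a l IH] H //=.
rewrite length_app; have := H a (or_introl erefl).
have := IH (fun b Hb => H b (or_intror Hb)); rewrite mulSn; lia.
Qed.


Lemma In_mem (T : eqType) (x : T) (s : seq.seq T) : In x s <-> x \in s.
Proof.
elim: s => [|y s IH] //=; rewrite inE; split.
- by case=> [->|/IH ->]; rewrite ?eqxx ?orbT.
- by case/orP => [/eqP ->|/IH]; [left|right].
Qed.

Lemma rev_curve (g : R -> point) : curve_continuous g -> curve_simple g ->
  curve_continuous (fun t => g (1 - t)%R) /\ curve_simple (fun t => g (1 - t)%R).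
Proof.
move=> Hc Hs; split.
- move=> t [Ht0 Ht1] eps Heps.
  have [d [Hd Hd']] := Hc (1 - t)%R ltac:(split; lra) eps Heps.
  exists d; split => // s [Hs0 Hs1] Hst; apply: Hd'; first (split; lra).
  by replace (1 - s - (1 - t))%R with (- (s - t))%R by ring; rewrite Rabs_Ropp.
- move=> s t [Hs0 Hs1] [Ht0 Ht1] E.
  have A : in01 (1 - s)%R by split; lra.
  have B : in01 (1 - t)%R by split; lra.
  move: (Hs _ _ A B E) => ?; lra.
Qed.

Section Main.
Variables (G H : sgraph) (k c : nat).
Variable posG : svert G -> point.
Variable cG : {set svert G} -> R -> point.
Hypothesis Hdraw : is_drawing posG cG.
Variable chiG : {set svert G} -> {set svert G} -> point -> {set svert G}.
Hypothesis HchiG : forall e1 e2 p, crossing cG e1 e2 p ->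
  chiG e1 e2 p = chiG e2 e1 p /\ (chiG e1 e2 p = e1 \/ chiG e1 e2 p = e2).
Variable lG : {set svert G} -> list ({set svert G} * point).
Hypothesis HlG : forall e, is_edge e -> (length (lG e) <= k)%coq_nat /\
  forall f p, crossing cG e f p -> chiG e f p = e -> In (f, p) (lG e).
Variable phi : svert H -> svert G.
Variable P : svert H -> svert H -> list (svert G).
Hypothesis Hphi : injective phi.
Hypothesis HP : forall u v, @sadj H u v ->
       P v u = seq.rev (P u v) /\
       (size (P u v) <= c)%N /\
       path (@sadj G) (phi u) (rcons (P u v) (phi v)) /\
       uniq (phi u :: rcons (P u v) (phi v)) /\
       (forall x w, x \in P u v -> x != phi w).
Hypothesis Hdisj : forall u v u' v', @sadj H u v -> @sadj H u' v' ->
       [set u; v] <> [set u'; v'] ->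
       forall x, x \in P u v -> x \notin P u' v'.

Lemma posG_inj : injective posG. Proof. by case: Hdraw. Qed.
Lemma Hed : forall e, is_edge e ->
     curve_continuous (cG e) /\ curve_simple (cG e) /\
     exists u v, e = [set u; v] /\ cG e 0%R = posG u /\ cG e 1%R = posG v.
Proof. by case: Hdraw => _ []. Qed.
Lemma Hav : forall e w p, is_edge e -> on_interior (cG e) p -> p <> posG w.
Proof. by case: Hdraw => _ [] _ []. Qed.
Lemma H3 : forall e1 e2 e3 p, is_edge e1 -> is_edge e2 -> is_edge e3 ->
     e1 <> e2 -> e1 <> e3 -> e2 <> e3 ->
     on_interior (cG e1) p -> on_interior (cG e2) p ->
     on_interior (cG e3) p -> False.
Proof. by case: Hdraw => _ [] _ []. Qed.

Definition ospec (a b : svert G) (ga : R -> point) :=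
  curve_continuous ga /\ curve_simple ga /\ ga 0%R = posG a /\ ga 1%R = posG b /\
  forall s, in01 s -> exists s', in01 s' /\ ga s = cG [set a; b] s' /\
     ((0 < s < 1)%R -> (0 < s' < 1)%R).

Lemma orient_ex a b : exists ga, @sadj G a b -> ospec a b ga.
Proof.
case: (classic (@sadj G a b)) => Hab; last by exists (fun _ => posG a).
have Hne : a != b by apply: contraTneq Hab => ->; rewrite sadj_irr.
have He : is_edge [set a; b] by exists a, b.
have [Hc [Hs [u' [v' [Ee [E0 E1]]]]]] := Hed _ He.
have Hu : u' \in [set a; b] by rewrite Ee !inE eqxx.
have Hv : v' \in [set a; b] by rewrite Ee !inE eqxx orbT.
have Ha : a \in [set u'; v'] by rewrite -Ee !inE eqxx.
have Hb : b \in [set u'; v'] by rewrite -Ee !inE eqxx orbT.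
move: Hu Hv Ha Hb; rewrite !inE.
case: (eqVneq u' a) => [Hua|Hua] /=.
- subst u' => _ Hv _ Hb.
  have Hvb : v' = b by move: Hb; rewrite eq_sym (negbTE Hne) /= => /eqP ->.
  subst v'.
  exists (cG [set a; b]) => _; do 4 (split => //).
  move=> s Hs'; exists s; do 2 (split => //).
- move=> /eqP Hub Hv Ha _. subst u'.
  have Hva : v' = a by move/eqP: Ha => ->.
  subst v'.
  have [Hc' Hs'] := @rev_curve _ Hc Hs.
  exists (fun t => cG [set a; b] (1 - t)%R) => _; do 2 (split => //).
  split; first by rewrite Rminus_0_r.
  split; first by rewrite Rminus_eq_0.
  move=> s [Hs0 Hs1]; exists (1 - s)%R; split; first (split; lra).
  split => //; lra.
Qed.

Definition ori a b := proj1_sig (constructive_indefinite_description _ (orient_ex a b)).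
Lemma ori_spec a b : @sadj G a b -> ospec a b (ori a b).
Proof. rewrite /ori; case: constructive_indefinite_description => ga; exact. Qed.


Lemma fin_cross g g' : is_edge g -> is_edge g' -> g <> g' ->
  exists Q, forall p, on_interior (cG g) p -> on_interior (cG g') p -> In p Q.
Proof.
move=> Hg Hg' Hne; exists (List.map snd (lG g ++ lG g')) => p H1 H2.
have Hc : crossing cG g g' p by [].
have Hc' : crossing cG g' g p by split => //; split => //; split => //; apply: nesym.
have [Hsym [E|E]] := HchiG _ _ _ Hc.
- have := (HlG _ Hg).2 _ _ Hc E => Hin.
  apply/in_map_iff; exists (g', p); split => //; apply: in_or_app; by left.
- have E' : chiG g' g p = g' by rewrite -Hsym.
  have := (HlG _ Hg').2 _ _ Hc' E' => Hin.
  apply/in_map_iff; exists (g, p); split => //; apply: in_or_app; by right.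
Qed.

Lemma img_fin a b a' b' : @sadj G a b -> @sadj G a' b' -> [set a; b] <> [set a'; b'] ->
  exists Q, forall p, img (ori a b) p -> img (ori a' b') p -> In p Q.
Proof.
move=> Hab Hab' Hne.
have He : is_edge [set a; b] by exists a, b.
have He' : is_edge [set a'; b'] by exists a', b'.
have [Q HQ] := fin_cross _ _ He He' Hne.
have [_ [_ [A0 [A1 Ai]]]] := ori_spec _ _ Hab.
have [_ [_ [B0 [B1 Bi]]]] := ori_spec _ _ Hab'.
exists (Q ++ [:: posG a; posG b; posG a'; posG b']) => p [t [Ht Hpt]] [t' [Ht' Hpt']].
apply: in_or_app.
case: (Req_dec t 0) => [Ht0|Ht0].
  by right; left; rewrite -Hpt Ht0 A0.
case: (Req_dec t 1) => [Ht1|Ht1].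
  by right; right; left; rewrite -Hpt Ht1 A1.
case: (Req_dec t' 0) => [Ht0'|Ht0'].
  by right; right; right; left; rewrite -Hpt' Ht0' B0.
case: (Req_dec t' 1) => [Ht1'|Ht1'].
  by right; right; right; right; left; rewrite -Hpt' Ht1' B1.
left; apply: HQ.
- have [s [Hs [E HI]]] := Ai t Ht; exists s; split.
    apply: HI; case: Ht => ? ?; split; lra.
  by rewrite -Hpt E.
- have [s [Hs [E HI]]] := Bi t' Ht'; exists s; split.
    apply: HI; case: Ht' => ? ?; split; lra.
  by rewrite -Hpt' E.
Qed.


Definition gl u v := pairmap (fun a b => [set a; b]) (phi u) (rcons (P u v) (phi v)).

Lemma per_edge u v : @sadj H u v -> exists al, curve_continuous al /\ curve_simple al /\
  al 0%R = posG (phi u) /\ al 1%R = posG (phi v) /\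
  forall t, (0 < t < 1)%R -> (exists y, y \in P u v /\ al t = posG y) \/
                             (exists g, g \in gl u v /\ on_interior (cG g) (al t)).
Proof.
move=> Huv.
have [_ [_ [Hpath [Huniq Hnot]]]] := HP _ _ Huv.
set x := phi u; set s := rcons (P u v) (phi v); set N := size (P u v).
have Hsz : size s = N.+1 by rewrite size_rcons.
pose vs := x :: s.
have Hszv : size vs = N.+2 by rewrite /= Hsz.
pose ga j := ori (seq.nth x vs j) (seq.nth x vs j.+1).
move/(pathP x): Hpath => Hp.
have Hadj : forall j, (j <= N)%N -> @sadj G (seq.nth x vs j) (seq.nth x vs j.+1).
  move=> j Hj; apply: Hp; by rewrite Hsz ltnS.
have Hsp : forall j, (j <= N)%N -> ospec (seq.nth x vs j) (seq.nth x vs j.+1) (ga j).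
  move=> j Hj; exact: ori_spec _ _ (Hadj j Hj).
have Hnth : forall i j, (i < N.+2)%N -> (j < N.+2)%N -> seq.nth x vs i = seq.nth x vs j -> i = j.
  move=> i j Hi Hj E; apply/eqP; rewrite -(nth_uniq x (s := vs)) ?Hszv //; by apply/eqP.
have [al [Hac [Has [Ha0 [Ha1 Him]]]]] : exists al, curve_continuous al /\ curve_simple al /\
    al 0%R = ga O 0%R /\ al 1%R = ga N 1%R /\
    forall t, in01 t -> exists j : nat, (leq j N) /\ img (ga j) (al t).
  apply: (@chain ga N _ _ _ _ N (leqnn N)).
  - move=> j Hj; have [? [? _]] := Hsp j Hj; by split.
  - move=> j Hj; have [_ [_ [_ [E1 _]]]] := Hsp j (ltnW Hj).
    have [_ [_ [E0 _]]] := Hsp j.+1 Hj; by rewrite E1 E0.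
  - move=> i j Hij HjN; apply: img_fin; [apply: Hadj; lia | apply: Hadj; lia | ].
    move=> E.
    have : seq.nth x vs i \in [set seq.nth x vs j; seq.nth x vs j.+1] by rewrite -E !inE eqxx.
    rewrite !inE => /orP [/eqP|/eqP] /Hnth E'.
    + have := E' ltac:(lia) ltac:(lia); lia.
    + have := E' ltac:(lia) ltac:(lia); lia.
  - move=> j Hj; have [_ [_ [E0 _]]] := Hsp O isT.
    have [_ [_ [_ [E1 _]]]] := Hsp j Hj.
    rewrite E0 E1 => /posG_inj /Hnth E; have := E isT ltac:(lia); lia.
have [_ [_ [E0 _]]] := Hsp O isT.
have [_ [_ [_ [E1 _]]]] := Hsp N (leqnn N).
have Hlast : seq.nth x vs N.+1 = phi v by rewrite /vs /= /s nth_rcons ltnn eqxx.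
exists al; do 2 (split => //); split; first by rewrite Ha0 E0.
split; first by rewrite Ha1 E1 Hlast.
move=> t Ht.
have Ht01 : in01 t by case: Ht => ? ?; split; lra.
have [j [Hj [s' [Hs' Hals]]]] := Him t Ht01.
have [_ [_ [F0 [F1 Fi]]]] := Hsp j Hj.
have Hvert : forall y, y \in vs -> al t = posG y -> exists y, y \in P u v /\ al t = posG y.
  move=> y; rewrite inE => /orP [/eqP ->|Hy] Ey.
    rewrite -E0 -Ha0 in Ey.
    have A0 : in01 0%R by split; lra.
    by move: (Has _ _ Ht01 A0 Ey) => ?; exfalso; lra.
  move: Hy; rewrite /s mem_rcons inE => /orP [/eqP Hyv|Hy].
    rewrite Hyv -Hlast -E1 -Ha1 in Ey.
    have A1 : in01 1%R by split; lra.
    by move: (Has _ _ Ht01 A1 Ey) => ?; exfalso; lra.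
  by exists y.
case: (Req_dec s' 0) => [Hs0|Hs0].
  left; apply: (Hvert (seq.nth x vs j)); first by apply: mem_nth; rewrite Hszv; lia.
  by rewrite -Hals Hs0 F0.
case: (Req_dec s' 1) => [Hs1|Hs1].
  left; apply: (Hvert (seq.nth x vs j.+1)); first by apply: mem_nth; rewrite Hszv; lia.
  by rewrite -Hals Hs1 F1.
right; exists [set seq.nth x vs j; seq.nth x vs j.+1]; split.
  have Hjs : (j < size s)%N by rewrite Hsz; lia.
  rewrite /gl -/x -/s -(nth_pairmap x set0 (fun a b => [set a; b]) Hjs x).
  by apply: mem_nth; rewrite size_pairmap.
have [s'' [Hs'' [E HI]]] := Fi s' Hs'.
exists s''; split; last by rewrite -Hals E.
apply: HI; case: Hs' => ? ?; split; lra.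
Qed.


Definition espec (E : {set svert H}) (x : (R -> point) * seq.seq {set svert G} * seq.seq (svert G)) :=
  exists u v, @sadj H u v /\ E = [set u; v] /\ x.1.2 = gl u v /\ x.2 = P u v /\
  curve_continuous x.1.1 /\ curve_simple x.1.1 /\
  x.1.1 0%R = posG (phi u) /\ x.1.1 1%R = posG (phi v) /\
  forall t, (0 < t < 1)%R -> (exists y, y \in x.2 /\ x.1.1 t = posG y) \/
                             (exists g, g \in x.1.2 /\ on_interior (cG g) (x.1.1 t)).

Lemma pick_ex E : exists x, is_edge E -> espec E x.
Proof.
case: (classic (is_edge E)) => HE; last by exists ((fun _ => (0, 0)%R), [::], [::]).
case: HE => u [v [Huv ->]].
have [al [Hc [Hs [H0 [H1 Hi]]]]] := per_edge _ _ Huv.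
by exists (al, gl u v, P u v) => _; exists u, v.
Qed.

Definition pk E := proj1_sig (constructive_indefinite_description _ (pick_ex E)).
Lemma pk_spec E : is_edge E -> espec E (pk E).
Proof. rewrite /pk; case: constructive_indefinite_description => x; exact. Qed.
Definition curveH E := (pk E).1.1.
Definition gsH E := (pk E).1.2.
Definition PsH E := (pk E).2.

Lemma F1 E g : is_edge E -> g \in gsH E -> is_edge g.
Proof.
move=> HE; have [u [v [Huv [_ [Hgl _]]]]] := pk_spec _ HE.
rewrite /gsH Hgl.
have [_ [_ [Hpath _]]] := HP _ _ Huv.
move/In_mem => Hg; have [a [b [Hab [-> _]]]] := @gl_mem _ _ _ _ _ Hpath Hg.
by exists a, b.
Qed.

Lemma F2 E : is_edge E -> (size (gsH E) <= c.+1)%N.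
Proof.
move=> HE; have [u [v [Huv [_ [Hgl _]]]]] := pk_spec _ HE.
rewrite /gsH Hgl.
have [_ [Hs _]] := HP _ _ Huv.
by rewrite /gl size_pairmap size_rcons ltnS.
Qed.


Lemma vs_both u v u' v' y : @sadj H u v -> @sadj H u' v' -> [set u; v] <> [set u'; v'] ->
  y \in phi u :: rcons (P u v) (phi v) -> y \in phi u' :: rcons (P u' v') (phi v') ->
  y \in [set phi u; phi v].
Proof.
move=> Huv Huv' Hne.
have [_ [_ [_ [_ Hn]]]] := HP _ _ Huv.
rewrite !inE !mem_rcons !inE => /orP [->//|/orP [->|Hy]]; first by rewrite orbT.
have Hd := Hdisj _ _ _ _ Huv Huv' Hne _ Hy.
rewrite (negbTE Hd) orbF => /orP [/eqP E|/eqP E].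
- by have := Hn y u' Hy; rewrite E eqxx.
- by have := Hn y v' Hy; rewrite E eqxx.
Qed.

Lemma F3 E F g : is_edge E -> is_edge F -> E <> F -> g \in gsH E -> g \in gsH F -> False.
Proof.
move=> HE HF Hne.
have [u [v [Huv [HEe [Hgl _]]]]] := pk_spec _ HE.
have [u' [v' [Huv' [HFe [Hgl' _]]]]] := pk_spec _ HF.
rewrite /gsH Hgl Hgl' => /In_mem Hg /In_mem Hg'.
have [_ [_ [Hp _]]] := HP _ _ Huv.
have [_ [_ [Hp' _]]] := HP _ _ Huv'.
have [a [b [Hab [Eg [Ha Hb]]]]] := @gl_mem _ _ _ _ _ Hp Hg.
have [a' [b' [_ [Eg' [Ha' Hb']]]]] := @gl_mem _ _ _ _ _ Hp' Hg'.
have Hne1 : [set u; v] <> [set u'; v'] by rewrite -HEe -HFe.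
have Hne2 : [set u'; v'] <> [set u; v] by move=> E'; apply: Hne1.
have Hin : forall z, z \in [set a; b] -> z \in [set a'; b'] by move=> z; rewrite -Eg Eg'.
have HaF : a \in phi u' :: rcons (P u' v') (phi v').
  have := Hin a; rewrite !inE eqxx /= => /(_ isT) /orP [/eqP ->|/eqP ->] //.
have HbF : b \in phi u' :: rcons (P u' v') (phi v').
  have := Hin b; rewrite !inE eqxx orbT /= => /(_ isT) /orP [/eqP ->|/eqP ->] //.
have Hab' : a != b by apply: contraTneq Hab => ->; rewrite sadj_irr.
have E1 : [set a; b] = [set phi u; phi v].
  apply: set2_sub => //; [exact: (@vs_both u v u' v' a Huv Huv' Hne1 Ha HaF)|exact: (@vs_both u v u' v' b Huv Huv' Hne1 Hb HbF)].
have E2 : [set a; b] = [set phi u'; phi v'].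
  apply: set2_sub => //; [exact: (@vs_both u' v' u v a Huv' Huv Hne2 HaF Ha)|exact: (@vs_both u' v' u v b Huv' Huv Hne2 HbF Hb)].
have Huv0 : u != v by apply: contraTneq Huv => ->; rewrite sadj_irr.
apply: Hne1; apply: set2_sub => //.
- have : phi u \in [set phi u'; phi v'] by rewrite -E2 E1 !inE eqxx.
  by rewrite !inE !(inj_eq Hphi).
- have : phi v \in [set phi u'; phi v'] by rewrite -E2 E1 !inE eqxx orbT.
  by rewrite !inE !(inj_eq Hphi).
Qed.


Lemma F4 E F y : is_edge E -> is_edge F -> E <> F -> y \in PsH E -> y \in PsH F -> False.
Proof.
move=> HE HF Hne.
have [u [v [Huv [HEe [_ [HPs _]]]]]] := pk_spec _ HE.
have [u' [v' [Huv' [HFe [_ [HPs' _]]]]]] := pk_spec _ HF.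
rewrite /PsH HPs HPs' => Hy Hy'.
have Hne1 : [set u; v] <> [set u'; v'] by rewrite -HEe -HFe.
by have := Hdisj _ _ _ _ Huv Huv' Hne1 _ Hy; rewrite Hy'.
Qed.

Lemma F5 E y w : is_edge E -> y \in PsH E -> y != phi w.
Proof.
move=> HE; have [u [v [Huv [_ [_ [HPs _]]]]]] := pk_spec _ HE.
have [_ [_ [_ [_ Hn]]]] := HP _ _ Huv.
rewrite /PsH HPs; exact: Hn.
Qed.

Lemma F6 E p : is_edge E -> on_interior (curveH E) p ->
  (exists y, y \in PsH E /\ p = posG y) \/ (exists g, g \in gsH E /\ on_interior (cG g) p).
Proof.
move=> HE [t [Ht <-]].
have [u [v [_ [_ [_ [_ [_ [_ [_ [_ Hi]]]]]]]]]] := pk_spec _ HE.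
case: (Hi t Ht) => [[y [Hy Ey]]|[g [Hg Hgi]]]; [left; by exists y | right; by exists g].
Qed.

Lemma F7 E F p : is_edge E -> is_edge F -> E <> F ->
  on_interior (curveH E) p -> on_interior (curveH F) p ->
  exists g1 g2, g1 \in gsH E /\ g2 \in gsH F /\
    on_interior (cG g1) p /\ on_interior (cG g2) p.
Proof.
move=> HE HF Hne HiE HiF.
case: (F6 _ _ HE HiE) => [[y [Hy Ey]]|[g1 [Hg1 Hi1]]];
case: (F6 _ _ HF HiF) => [[y' [Hy' Ey']]|[g2 [Hg2 Hi2]]].
- rewrite Ey' in Ey; have Eyy := posG_inj _ _ Ey; subst y'.
  by case: (F4 _ _ _ HE HF Hne Hy Hy').
- by case: (Hav _ y _ (F1 _ _ HF Hg2) Hi2 Ey).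
- by case: (Hav _ y' _ (F1 _ _ HE Hg1) Hi1 Ey').
- by exists g1, g2.
Qed.


Lemma Uniq2 E F p g1 g2 h : is_edge E -> is_edge F -> E <> F ->
  g1 \in gsH E -> g2 \in gsH F -> on_interior (cG g1) p -> on_interior (cG g2) p ->
  is_edge h -> on_interior (cG h) p -> h = g1 \/ h = g2.
Proof.
move=> HE HF Hne Hg1 Hg2 Hi1 Hi2 Hh Hih.
case: (classic (h = g1)) => [|N1]; first by left.
case: (classic (h = g2)) => [|N2]; first by right.
have N12 : g1 <> g2 by move=> E12; subst g2; exact: (F3 _ _ _ HE HF Hne Hg1 Hg2).
by case: (H3 _ _ _ _ Hh (F1 _ _ HE Hg1) (F1 _ _ HF Hg2) N1 N2 N12 Hih Hi1 Hi2).
Qed.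

Definition condH E p := exists g, g \in gsH E /\ exists f, crossing cG g f p /\ chiG g f p = g.

Lemma cond_iff E F p g1 g2 : is_edge E -> is_edge F -> E <> F ->
  g1 \in gsH E -> g2 \in gsH F -> on_interior (cG g1) p -> on_interior (cG g2) p ->
  (condH E p <-> chiG g1 g2 p = g1).
Proof.
move=> HE HF Hne Hg1 Hg2 Hi1 Hi2.
have N12 : g1 <> g2 by move=> E12; subst g2; exact: (F3 _ _ _ HE HF Hne Hg1 Hg2).
split.
- move=> [g [Hg [f [[Heg [Hef [Hgf [Hig Hif]]]] Hch]]]].
  case: (Uniq2 _ _ _ _ _ _ HE HF Hne Hg1 Hg2 Hi1 Hi2 Heg Hig) => Eg; subst g; last first.
    by case: (F3 _ _ _ HE HF Hne Hg Hg2).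
  case: (Uniq2 _ _ _ _ _ _ HE HF Hne Hg1 Hg2 Hi1 Hi2 Hef Hif) => Ef; subst f => //.
- move=> Hch; exists g1; split => //; exists g2; split => //.
  split; first exact: (F1 _ _ HE Hg1).
  split; first exact: (F1 _ _ HF Hg2).
  by split.
Qed.


Lemma length_size (T : Type) (s : seq.seq T) : length s = size s.
Proof. by elim: s => //= x s ->. Qed.

Lemma main_H : k_gap_planar H (c.+1 * k).
Proof.
pose chiH E F p := if excluded_middle_informative (condH E p) then E else F.
pose hmap f := epsilon (inhabits (set0 : {set svert H})) (fun F => is_edge F /\ f \in gsH F).
pose lH E := flat_map (fun g => List.map (fun fp => (hmap fp.1, fp.2)) (lG g)) (gsH E).
exists (fun w => posG (phi w)), curveH; split.
- split; first by move=> x y /posG_inj /Hphi.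
  split.
    move=> E HE; have [u [v [Huv [HEe [_ [_ [Hc [Hs [H0 [H1 _]]]]]]]]]] := pk_spec _ HE.
    rewrite /curveH; do 2 (split => //); by exists u, v.
  split.
    move=> E w p HE Hi Ep; case: (F6 _ _ HE Hi) => [[y [Hy Ey]]|[g [Hg Hgi]]].
    + rewrite Ep in Ey; have Eyw := posG_inj _ _ Ey.
      by have := F5 _ y w HE Hy; rewrite -Eyw eqxx.
    + exact: (Hav _ (phi w) _ (F1 _ _ HE Hg) Hgi Ep).
  move=> E1 E2 E3 p HE1 HE2 HE3 N12 N13 N23 Hi1 Hi2 Hi3.
  have [g1 [g2 [Hg1 [Hg2 [Hj1 Hj2]]]]] := F7 _ _ _ HE1 HE2 N12 Hi1 Hi2.
  have [g1' [g3 [_ [Hg3 [_ Hj3]]]]] := F7 _ _ _ HE1 HE3 N13 Hi1 Hi3.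
  apply: (H3 g1 g2 g3 p (F1 _ _ HE1 Hg1) (F1 _ _ HE2 Hg2) (F1 _ _ HE3 Hg3)) => //.
  + move=> E; subst; exact: (F3 _ _ _ HE1 HE2 N12 Hg1 Hg2).
  + move=> E; subst; exact: (F3 _ _ _ HE1 HE3 N13 Hg1 Hg3).
  + move=> E; subst; exact: (F3 _ _ _ HE2 HE3 N23 Hg2 Hg3).
- exists chiH; split.
  + move=> E F p [HE [HF [Hne [HiE HiF]]]].
    have [g1 [g2 [Hg1 [Hg2 [Hj1 Hj2]]]]] := F7 _ _ _ HE HF Hne HiE HiF.
    have Hne' : F <> E by apply: nesym.
    have C1 := cond_iff _ _ _ _ _ HE HF Hne Hg1 Hg2 Hj1 Hj2.
    have C2 := cond_iff _ _ _ _ _ HF HE Hne' Hg2 Hg1 Hj2 Hj1.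
    have N12 : g1 <> g2 by move=> E12; subst g2; exact: (F3 _ _ _ HE HF Hne Hg1 Hg2).
    have Hcr : crossing cG g1 g2 p.
      split; first exact: (F1 _ _ HE Hg1).
      split; first exact: (F1 _ _ HF Hg2).
      by split.
    have [Hsym Hor] := HchiG _ _ _ Hcr.
    rewrite /chiH; case: excluded_middle_informative => c1;
      case: excluded_middle_informative => c2.
    * exfalso; apply: N12; move/C1: c1 => c1; move/C2: c2 => c2.
      exact: (eq_trans (esym c1) (eq_trans Hsym c2)).
    * by split => //; left.
    * by split => //; right.
    * exfalso; case: Hor => Eq.
      -- by apply: c1; apply/C1.
      -- by apply: c2; apply/C2; rewrite -Hsym.
  + move=> E HE; exists (lH E); split.
      apply: (@Nat.le_trans _ (length (gsH E) * k)).
        apply: length_flat_map => g /In_mem Hg.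
        rewrite length_map; exact: (HlG _ (F1 _ _ HE Hg)).1.
      apply/leP; rewrite length_size; apply: leq_mul => //; exact: F2.
    move=> F p [_ [HF [Hne [HiE HiF]]]].
    have [g1 [g2 [Hg1 [Hg2 [Hj1 Hj2]]]]] := F7 _ _ _ HE HF Hne HiE HiF.
    have C1 := cond_iff _ _ _ _ _ HE HF Hne Hg1 Hg2 Hj1 Hj2.
    have N12 : g1 <> g2 by move=> E12; subst g2; exact: (F3 _ _ _ HE HF Hne Hg1 Hg2).
    have Hcr : crossing cG g1 g2 p.
      split; first exact: (F1 _ _ HE Hg1).
      split; first exact: (F1 _ _ HF Hg2).
      by split.
    rewrite /chiH; case: excluded_middle_informative => c1; last by move=> Eq; case: Hne.
    move=> _; move/C1: c1 => c1.
    have Hin := (HlG _ (F1 _ _ HE Hg1)).2 _ _ Hcr c1.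
    have Hh : hmap g2 = F.
      have Hex : exists F', is_edge F' /\ g2 \in gsH F' by exists F.
      have [HF' Hg2'] := epsilon_spec (inhabits (set0 : {set svert H})) _ Hex.
      case: (classic (hmap g2 = F)) => // Hn.
      by case: (F3 _ _ _ HF' HF Hn Hg2' Hg2).
    apply/in_flat_map; exists g1; split; first by apply/In_mem.
    apply/in_map_iff; exists (g2, p); by rewrite /= Hh.
Qed.

End Main.


Theorem lemma10 (k c : nat) (G H : sgraph) :
  k_gap_planar G k -> has_subdivision_subgraph G H c ->
  k_gap_planar H (c.+1 * k).
Proof.
move=> [posG [cG [Hdraw [chiG [HchiG Hcnt]]]]] [phi [P [Hphi [HP Hdisj]]]].
have Hex : forall e : {set svert G}, exists l : list ({set svert G} * point),
    is_edge e -> (length l <= k)%coq_nat /\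
    forall f p, crossing cG e f p -> chiG e f p = e -> In (f, p) l.
  move=> e; case: (classic (is_edge e)) => He; last by exists nil.
  have [l Hl] := Hcnt e He; by exists l.
pose lG e := proj1_sig (constructive_indefinite_description _ (Hex e)).
have HlG : forall e, is_edge e -> (length (lG e) <= k)%coq_nat /\
    forall f p, crossing cG e f p -> chiG e f p = e -> In (f, p) (lG e).
  move=> e He; rewrite /lG; case: constructive_indefinite_description => l Hl; exact: Hl.
exact: (@main_H G H k c posG cG Hdraw chiG HchiG lG HlG phi P Hphi HP Hdisj).
Qed.
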